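(* Let $\mathcal S=\{(\alpha_1,\dots,\alpha_6)\in\Sigma:\ \alpha_6=0\}$, regarded as a $5$-dimensional submanifold with coordinates $(\alpha_1,\dots,\alpha_5)$; it is invariant under the action of $I(\mathbb{R}^2_1)$. Provided $I(\mathbb{R}^2_1)$ acts on $\mathcal S$ with three-dimensional orbits, any algebraic $I(\mathbb{R}^2_1)$-invariant $I$ of $\mathcal S$ can be (locally) uniquely expressed as an analytic function $I=F(\mathcal I'_1,\mathcal I'_2)$, where $$\mathcal I'_1=\alpha_4^2-\alpha_5^2,\qquad \mathcal I'_2=2\alpha_3\alpha_4\alpha_5-\alpha_2\alpha_4^2-\alpha_1\alpha_5^2 .$$
   Context: The Minkowski plane $\mathbb{R}^2_1$ has pseudo-Cartesian coordinates $(t,x)$ and metric $dt^2-dx^2$. Every Killing $2$-tensor (symmetric contravariant $2$-tensor $\mathbf K$ with vanishing Schouten bracket $[\mathbf K,\mathbf g]=0$) of $\mathbb{R}^2_1$ has components $K^{tt}=\alpha_1+2\alpha_4x+\alpha_6x^2$, $K^{tx}=K^{xt}=\alpha_3+\alpha_4t+\alpha_5x+\alpha_6tx$, $K^{xx}=\alpha_2+2\alpha_5t+\alpha_6t^2$ for unique constants, identifying the space of such tensors with the parameter space $\Sigma\cong\mathbb{R}^6$. The isometry group $I(\mathbb{R}^2_1)$ (parametrized by $(\phi,a,b)$) acts on $\mathbb{R}^2_1$ by $\tilde t=t\cosh\phi+x\sinh\phi+a$, $\tilde x=t\sinh\phi+x\cosh\phi+b$, and on $\Sigma$ by $\tilde\alpha_1=\alpha_1\cosh^2\phi+2\alpha_3\cosh\phi\sinh\phi+\alpha_2\sinh^2\phi+\alpha_6b^2-2(\alpha_4\cosh\phi+\alpha_5\sinh\phi)b$,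 $\tilde\alpha_2=\alpha_1\sinh^2\phi+2\alpha_3\cosh\phi\sinh\phi+\alpha_2\cosh^2\phi+\alpha_6a^2-2(\alpha_5\cosh\phi+\alpha_4\sinh\phi)a$, $\tilde\alpha_3=\alpha_3(\cosh^2\phi+\sinh^2\phi)+(\alpha_1+\alpha_2)\cosh\phi\sinh\phi-(a\alpha_4+b\alpha_5)\cosh\phi-(a\alpha_5+b\alpha_4)\sinh\phi+\alpha_6ab$, $\tilde\alpha_4=\alpha_4\cosh\phi+\alpha_5\sinh\phi-\alpha_6b$, $\tilde\alpha_5=\alpha_4\sinh\phi+\alpha_5\cosh\phi-\alpha_6a$, $\tilde\alpha_6=\alpha_6$. An $I(\mathbb{R}^2_1)$-invariant of $\mathcal S$ is a smooth function $F$ on (a subset of) $\mathcal S$ with $F(\alpha)=F(\tilde\alpha)$ for all group elements. *)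

(* Defs.v *)
From Stdlib Require Import Reals Lra.
From Coquelicot Require Import Coquelicot.
Open Scope R_scope.

Record P6 := mkP6 { al1 : R; al2 : R; al3 : R; al4 : R; al5 : R; al6 : R }.

(* A point of S = {alpha_6 = 0}, with coordinates (alpha_1,...,alpha_5). *)
Record P5 := mkP5 { b1 : R; b2 : R; b3 : R; b4 : R; b5 : R }.

Definition incS (p : P5) : P6 := mkP6 (b1 p) (b2 p) (b3 p) (b4 p) (b5 p) 0.
Definition coordS (q : P6) : P5 := mkP5 (al1 q) (al2 q) (al3 q) (al4 q) (al5 q).

(* The induced action of the isometry (phi,a,b) on Sigma. *)
Definition act (phi a b : R) (q : P6) : P6 :=
  let c := cosh phi in let s := sinh phi in
  let a1 := al1 q in let a2 := al2 q in let a3 := al3 q in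
  let a4 := al4 q in let a5 := al5 q in let a6 := al6 q in
  mkP6
    (a1 * c ^ 2 + 2 * a3 * c * s + a2 * s ^ 2 + a6 * b ^ 2
       - 2 * (a4 * c + a5 * s) * b)
    (a1 * s ^ 2 + 2 * a3 * c * s + a2 * c ^ 2 + a6 * a ^ 2
       - 2 * (a5 * c + a4 * s) * a)
    (a3 * (c ^ 2 + s ^ 2) + (a1 + a2) * c * s - (a * a4 + b * a5) * c
       - (a * a5 + b * a4) * s + a6 * a * b)
    (a4 * c + a5 * s - a6 * b)
    (a4 * s + a5 * c - a6 * a)
    a6.

Definition actS (phi a b : R) (p : P5) : P5 := coordS (act phi a b (incS p)).

Definition P5lin (c1 c2 c3 : R) (u v w : P5) : P5 :=
  mkP5 (c1 * b1 u + c2 * b1 v + c3 * b1 w) (c1 * b2 u + c2 * b2 v + c3 * b2 w)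
       (c1 * b3 u + c2 * b3 v + c3 * b3 w) (c1 * b4 u + c2 * b4 v + c3 * b4 w)
       (c1 * b5 u + c2 * b5 v + c3 * b5 w).
Definition P5zero : P5 := mkP5 0 0 0 0 0.

Definition dcurve (g : R -> P5) : P5 :=
  mkP5 (Derive (fun t => b1 (g t)) 0) (Derive (fun t => b2 (g t)) 0)
       (Derive (fun t => b3 (g t)) 0) (Derive (fun t => b4 (g t)) 0)
       (Derive (fun t => b5 (g t)) 0).

Definition gen_phi (p : P5) : P5 := dcurve (fun t => actS t 0 0 p).
Definition gen_a (p : P5) : P5 := dcurve (fun t => actS 0 t 0 p).
Definition gen_b (p : P5) : P5 := dcurve (fun t => actS 0 0 t p).

(* The orbit through p is three-dimensional: the orbit map
   (phi,a,b) |-> (phi,a,b).p has rank 3 at the identity, i.e. the three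
   infinitesimal generators at p are linearly independent. *)
Definition orbit_dim3 (p : P5) : Prop :=
  forall c1 c2 c3 : R,
    P5lin c1 c2 c3 (gen_phi p) (gen_a p) (gen_b p) = P5zero ->
    c1 = 0 /\ c2 = 0 /\ c3 = 0.

Definition invariantS (I : P5 -> R) : Prop :=
  forall (phi a b : R) (p : P5), I (actS phi a b p) = I p.

Definition is_poly5 (I : P5 -> R) : Prop :=
  exists (d : nat) (c : nat -> nat -> nat -> nat -> nat -> R),
    forall p : P5,
      I p = sum_f_R0 (fun i1 => sum_f_R0 (fun i2 => sum_f_R0 (fun i3 =>
              sum_f_R0 (fun i4 => sum_f_R0 (fun i5 =>
                c i1 i2 i3 i4 i5 * b1 p ^ i1 * b2 p ^ i2 * b3 p ^ i3
                  * b4 p ^ i4 * b5 p ^ i5) d) d) d) d) d.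

(* Open subsets of S ~ R^5 and of R^2 (box topology = Euclidean topology). *)
Definition open5 (U : P5 -> Prop) : Prop :=
  forall p, U p -> exists eps, 0 < eps /\
    forall q, Rabs (b1 q - b1 p) < eps -> Rabs (b2 q - b2 p) < eps ->
      Rabs (b3 q - b3 p) < eps -> Rabs (b4 q - b4 p) < eps ->
      Rabs (b5 q - b5 p) < eps -> U q.
Definition open2 (V : R -> R -> Prop) : Prop :=
  forall x y, V x y -> exists eps, 0 < eps /\
    forall x' y', Rabs (x' - x) < eps -> Rabs (y' - y) < eps -> V x' y'.

Definition analytic2_at (F : R -> R -> R) (x0 y0 : R) : Prop :=
  exists (c : nat -> nat -> R) (r : R), 0 < r /\
    forall x y, Rabs (x - x0) < r -> Rabs (y - y0) < r ->
      (exists M, forall N, sum_f_R0 (fun i => sum_f_R0 (fun j =>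
           Rabs (c i j) * Rabs (x - x0) ^ i * Rabs (y - y0) ^ j) N) N <= M) /\
      Un_cv (fun N => sum_f_R0 (fun i => sum_f_R0 (fun j =>
           c i j * (x - x0) ^ i * (y - y0) ^ j) N) N) (F x y).

Definition analytic2_on (F : R -> R -> R) (V : R -> R -> Prop) : Prop :=
  forall x y, V x y -> analytic2_at F x y.

Definition Inv1 (p : P5) : R := b4 p ^ 2 - b5 p ^ 2.
Definition Inv2 (p : P5) : R :=
  2 * b3 p * b4 p * b5 p - b2 p * b4 p ^ 2 - b1 p * b5 p ^ 2.

(* Main.v *)
Require Import Defs.
From Stdlib Require Import Reals Lra Lia List Arith.
From Coquelicot Require Import Coquelicot.
Open Scope R_scope.

Lemma gen_phi_eq q : gen_phi q = mkP5 (2*b3 q) (2*b3 q) (b1 q + b2 q) (b5 q) (b4 q).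
Proof.
  destruct q as [q1 q2 q3 q4 q5].
  unfold gen_phi, dcurve, actS, act, coordS, incS; simpl.
  f_equal; apply is_derive_unique; unfold cosh, sinh; auto_derive; auto;
  rewrite ?Ropp_0, ?exp_0; field.
Qed.
Lemma gen_a_eq q : gen_a q = mkP5 0 (-2*b5 q) (- b4 q) 0 0.
Proof.
  destruct q as [q1 q2 q3 q4 q5].
  unfold gen_a, dcurve, actS, act, coordS, incS; simpl.
  f_equal; apply is_derive_unique; unfold cosh, sinh; auto_derive; auto;
  rewrite ?Ropp_0, ?exp_0; field.
Qed.
Lemma gen_b_eq q : gen_b q = mkP5 (-2*b4 q) 0 (- b5 q) 0 0.
Proof.
  destruct q as [q1 q2 q3 q4 q5].
  unfold gen_b, dcurve, actS, act, coordS, incS; simpl.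
  f_equal; apply is_derive_unique; unfold cosh, sinh; auto_derive; auto;
  rewrite ?Ropp_0, ?exp_0; field.
Qed.

Definition sec (sg k x y : R) : P5 :=
  mkP5 (-y/k^2) (-y/k^2) (sg*y/k^2) ((k + x/k)/2) (sg*((k - x/k)/2)).
Definition trans (a b : R) (B : P5) : P5 :=
  mkP5 (b1 B - 2 * b4 B * b) (b2 B - 2 * b5 B * a) (b3 B - a * b4 B - b * b5 B) (b4 B) (b5 B).

Lemma actS_decomp phi a b q : actS phi a b q = trans a b (actS phi 0 0 q).
Proof. destruct q; unfold actS, act, coordS, incS, trans; simpl; f_equal; ring. Qed.

Definition aa sg k (B : P5) :=
  let T := sec sg k (Inv1 B) (Inv2 B) in
  let d1 := b1 T - b1 B in let d2 := b2 T - b2 B in let d3 := b3 T - b3 B in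
  (b5 B * d1 + (b5 B - 2*sg*k) * d2 - 2 * b4 B * d3) / (2*k*k).
Definition bb sg k (B : P5) :=
  let T := sec sg k (Inv1 B) (Inv2 B) in
  let d1 := b1 T - b1 B in let d2 := b2 T - b2 B in let d3 := b3 T - b3 B in
  (b4 B * d2 + (b4 B - 2*k) * d1 - 2 * b5 B * d3) / (2*k*k).

Lemma trans_ok sg k B : (sg = 1 \/ sg = -1) -> k <> 0 -> b4 B + sg * b5 B = k ->
  trans (aa sg k B) (bb sg k B) B = sec sg k (Inv1 B) (Inv2 B).
Proof.
  intros Hs Hk Hm. destruct B as [B1 B2 B3 B4 B5]; simpl in Hm.
  unfold trans, aa, bb, sec, Inv1, Inv2; simpl.
  destruct Hs; subst sg; [assert (B4 = k - B5) by lra | assert (B4 = k + B5) by lra];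
  subst B4; f_equal; field; auto.
Qed.

Lemma sec_inv sg k x y : (sg = 1 \/ sg = -1) -> k <> 0 ->
  Inv1 (sec sg k x y) = x /\ Inv2 (sec sg k x y) = y /\ b4 (sec sg k x y) + sg * b5 (sec sg k x y) = k.
Proof.
  intros Hs Hk; unfold sec, Inv1, Inv2; simpl.
  destruct Hs; subst sg; repeat split; field; auto.
Qed.

Lemma boost_ok sg k q : (sg = 1 \/ sg = -1) -> 0 < k * (b4 q + sg * b5 q) ->
  exists phi, Inv1 (actS phi 0 0 q) = Inv1 q /\ Inv2 (actS phi 0 0 q) = Inv2 q /\
    b4 (actS phi 0 0 q) + sg * b5 (actS phi 0 0 q) = k.
Proof.
  intros Hs Hp. set (m := b4 q + sg * b5 q) in *.
  assert (Hm : m <> 0) by (intro h; rewrite h in Hp; lra).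
  assert (Hk : k <> 0) by (intro h; rewrite h in Hp; lra).
  assert (HE : 0 < k / m).
  { replace (k/m) with ((k*m) / (m*m)) by (field; auto).
    apply Rdiv_lt_0_compat; auto. pose proof (Rsqr_pos_lt m Hm) as h; unfold Rsqr in h; exact h. }
  set (E := k/m) in *.
  exists (sg * ln E).
  assert (Hc : cosh (sg * ln E) = (E + /E)/2).
  { unfold cosh. destruct Hs; subst sg;
    [rewrite Rmult_1_l | replace (-1 * ln E) with (- ln E) by ring; rewrite Ropp_involutive];
    rewrite exp_Ropp, exp_ln; auto; lra. }
  assert (Hsh : sinh (sg * ln E) = sg * ((E - /E)/2)).
  { unfold sinh. destruct Hs; subst sg;
    [rewrite Rmult_1_l | replace (-1 * ln E) with (- ln E) by ring; rewrite Ropp_involutive];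
    rewrite exp_Ropp, exp_ln; auto; lra. }
  assert (HEn : E <> 0) by lra.
  assert (Hmdef : m = b4 q + sg*b5 q) by reflexivity.
  unfold E in *. clearbody m.
  destruct q as [q1 q2 q3 q4 q5]; simpl in *.
  unfold actS, act, coordS, incS, Inv1, Inv2; simpl. rewrite Hc, Hsh.
  destruct Hs; subst sg; [assert (q4 = m - q5) by lra | assert (q4 = m + q5) by lra];
  subst q4; repeat split; field; auto.
Qed.

Lemma to_sec sg k q : (sg = 1 \/ sg = -1) -> 0 < k * (b4 q + sg * b5 q) ->
  exists phi a b, actS phi a b q = sec sg k (Inv1 q) (Inv2 q).
Proof.
  intros Hs Hp.
  assert (Hk : k <> 0) by (intro h; rewrite h in Hp; lra).
  destruct (boost_ok sg k q Hs Hp) as [phi [H1 [H2 H3]]].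
  set (B := actS phi 0 0 q) in *.
  exists phi, (aa sg k B), (bb sg k B).
  rewrite actS_decomp. fold B. rewrite trans_ok; auto. now rewrite H1, H2.
Qed.

Fixpoint meval (l : list (R*nat*nat)) (X Y : R) : R :=
  match l with nil => 0 | (c,i,j)::t => c * X^i * Y^j + meval t X Y end.

Definition isP (G : R -> R -> R) : Prop :=
  forall x0 y0, exists l, forall x y, G x y = meval l (x - x0) (y - y0).

Lemma meval_app l1 l2 X Y : meval (l1 ++ l2) X Y = meval l1 X Y + meval l2 X Y.
Proof. induction l1 as [|[[c i] j] t IH]; simpl; [ring|rewrite IH; ring]. Qed.

Definition mm (m1 m2 : R*nat*nat) : R*nat*nat :=
  let '(c,i,j) := m1 in let '(c',i',j') := m2 in (c*c', (i+i')%nat, (j+j')%nat).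

Lemma meval_map m l X Y : meval (map (mm m) l) X Y = meval (m::nil) X Y * meval l X Y.
Proof.
  destruct m as [[c i] j].
  induction l as [|[[c' i'] j'] t IH]; simpl in *; [ring|].
  rewrite IH, !pow_add; ring.
Qed.

Definition lmul l1 l2 := flat_map (fun m1 => map (mm m1) l2) l1.

Lemma meval_lmul l1 l2 X Y : meval (lmul l1 l2) X Y = meval l1 X Y * meval l2 X Y.
Proof.
  induction l1 as [|m t IH]; simpl; [ring|].
  unfold lmul in *; simpl. rewrite meval_app, IH, meval_map.
  destruct m as [[c i] j]; simpl; ring.
Qed.

Lemma isP_ext F G : (forall x y, F x y = G x y) -> isP F -> isP G.
Proof. intros H HF x0 y0; destruct (HF x0 y0) as [l Hl]; exists l; intros; rewrite <- H; auto. Qed.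

Lemma isP_const c : isP (fun _ _ => c).
Proof. intros x0 y0; exists ((c,0%nat,0%nat)::nil); intros; simpl; ring. Qed.

Lemma isP_x : isP (fun x _ => x).
Proof. intros x0 y0; exists ((x0,0%nat,0%nat)::(1,1%nat,0%nat)::nil); intros; simpl; ring. Qed.

Lemma isP_y : isP (fun _ y => y).
Proof. intros x0 y0; exists ((y0,0%nat,0%nat)::(1,0%nat,1%nat)::nil); intros; simpl; ring. Qed.

Lemma isP_plus F G : isP F -> isP G -> isP (fun x y => F x y + G x y).
Proof.
  intros HF HG x0 y0; destruct (HF x0 y0) as [l1 H1]; destruct (HG x0 y0) as [l2 H2].
  exists (l1 ++ l2); intros; rewrite meval_app, H1, H2; auto.
Qed.

Lemma isP_mult F G : isP F -> isP G -> isP (fun x y => F x y * G x y).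
Proof.
  intros HF HG x0 y0; destruct (HF x0 y0) as [l1 H1]; destruct (HG x0 y0) as [l2 H2].
  exists (lmul l1 l2); intros; rewrite meval_lmul, H1, H2; auto.
Qed.

Lemma isP_pow F n : isP F -> isP (fun x y => F x y ^ n).
Proof.
  intros HF; induction n; simpl.
  - apply isP_const.
  - apply isP_mult; auto.
Qed.

Lemma isP_sum (f : nat -> R -> R -> R) n : (forall i, isP (f i)) ->
  isP (fun x y => sum_f_R0 (fun i => f i x y) n).
Proof.
  intros H; induction n; simpl; auto.
  apply isP_plus; auto.
Qed.

Fixpoint coef (l : list (R*nat*nat)) (i j : nat) : R :=
  match l with nil => 0
  | (c,i',j')::t => (if (Nat.eqb i i' && Nat.eqb j j')%bool then c else 0) + coef t i j end.
Fixpoint bound (l : list (R*nat*nat)) : nat :=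
  match l with nil => 0%nat | (c,i,j)::t => Nat.max (Nat.max i j) (bound t) end.
Fixpoint absl (l : list (R*nat*nat)) : list (R*nat*nat) :=
  match l with nil => nil | (c,i,j)::t => (Rabs c,i,j) :: absl t end.

Lemma sum_single (f : nat -> R) i0 N : (i0 <= N)%nat ->
  sum_f_R0 (fun i => if Nat.eqb i i0 then f i else 0) N = f i0.
Proof.
  intros H; induction N.
  - assert (i0 = 0%nat) by lia; subst; simpl; auto.
  - cbn [sum_f_R0]. destruct (Nat.eq_dec i0 (S N)) as [e|e].
    + subst. rewrite Nat.eqb_refl.
      replace (sum_f_R0 _ N) with 0; [ring|].
      clear. symmetry. apply sum_eq_R0. intros n Hn.
      destruct (Nat.eqb_spec n (S N)); [lia|auto].
    + rewrite IHN by lia. destruct (Nat.eqb_spec (S N) i0); [lia|ring].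
Qed.

Lemma coef_sum l X Y N : (bound l <= N)%nat ->
  sum_f_R0 (fun i => sum_f_R0 (fun j => coef l i j * X ^ i * Y ^ j) N) N = meval l X Y.
Proof.
  induction l as [|[[c i0] j0] t IH]; simpl; intros HN.
  - rewrite sum_eq_R0; auto. intros; rewrite sum_eq_R0; auto; intros; ring.
  - rewrite <- IH by lia.
    transitivity (sum_f_R0 (fun i => (if Nat.eqb i i0 then c * X^i * Y^j0 else 0) +
        sum_f_R0 (fun j => coef t i j * X ^ i * Y ^ j) N) N).
    + apply sum_eq; intros i Hi.
      transitivity (sum_f_R0 (fun j => (if ((i =? i0) && (j =? j0))%bool then c * X^i * Y^j else 0)
          + coef t i j * X ^ i * Y ^ j) N).
      { apply sum_eq; intros j _; destruct (_ && _)%bool; ring. }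
      rewrite sum_plus. f_equal. destruct (i =? i0) eqn:E; simpl.
      * apply (sum_single (fun j => c * X^i * Y^j) j0 N); lia.
      * apply sum_eq_R0; auto.
    + rewrite sum_plus. rewrite (sum_single (fun i => c * X^i * Y^j0) i0 N) by lia. reflexivity.
Qed.

Lemma bound_absl l : bound (absl l) = bound l.
Proof. induction l as [|[[c i] j] t IH]; simpl; auto. Qed.

Lemma coef_abs l i j : Rabs (coef l i j) <= coef (absl l) i j.
Proof.
  induction l as [|[[c i0] j0] t IH]; simpl.
  - rewrite Rabs_R0; lra.
  - eapply Rle_trans; [apply Rabs_triang|].
    apply Rplus_le_compat; auto.
    destruct (_ && _)%bool; [lra| rewrite Rabs_R0; lra].
Qed.

Lemma term_le_sum (u : nat -> R) n N : (forall k, 0 <= u k) -> (n <= N)%nat -> u n <= sum_f_R0 u N.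
Proof.
  intros Hu H; induction N.
  - assert (n = 0%nat) by lia; subst; simpl; lra.
  - destruct (Nat.eq_dec n (S N)).
    + subst; simpl. pose proof (cond_pos_sum u N Hu). lra.
    + simpl. specialize (Hu (S N)). assert (u n <= sum_f_R0 u N) by (apply IHN; lia). lra.
Qed.

Lemma isP_analytic F : isP F -> forall x0 y0, analytic2_at F x0 y0.
Proof.
  intros HF x0 y0. destruct (HF x0 y0) as [l Hl].
  exists (coef l), 1. split; [lra|]. intros x y _ _.
  set (B := bound l).
  set (S := fun N => sum_f_R0 (fun i => sum_f_R0 (fun j =>
           Rabs (coef l i j) * Rabs (x - x0) ^ i * Rabs (y - y0) ^ j) N) N).
  assert (HS : forall N, 0 <= S N).
  { intros N; unfold S; apply cond_pos_sum; intros i; apply cond_pos_sum; intros j.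
    apply Rmult_le_pos; [apply Rmult_le_pos|]; try apply pow_le; try apply Rabs_pos. }
  split.
  - exists (meval (absl l) (Rabs (x - x0)) (Rabs (y - y0)) + sum_f_R0 S B).
    intros N. fold (S N). destruct (le_lt_dec N B) as [h|h].
    + pose proof (term_le_sum S N B HS h).
      assert (0 <= meval (absl l) (Rabs (x - x0)) (Rabs (y - y0))).
      { rewrite <- (coef_sum (absl l) _ _ B) by (rewrite bound_absl; lia).
        apply cond_pos_sum; intros i; apply cond_pos_sum; intros j.
        apply Rmult_le_pos; [apply Rmult_le_pos|]; try apply pow_le; try apply Rabs_pos.
        eapply Rle_trans; [apply Rabs_pos|apply coef_abs]. }
      lra.
    + assert (S N <= meval (absl l) (Rabs (x - x0)) (Rabs (y - y0))).
      { rewrite <- (coef_sum (absl l) _ _ N) by (rewrite bound_absl; unfold B in h; lia).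
        unfold S. apply sum_Rle; intros i _; apply sum_Rle; intros j _.
        apply Rmult_le_compat_r; [apply pow_le, Rabs_pos|].
        apply Rmult_le_compat_r; [apply pow_le, Rabs_pos|]. apply coef_abs. }
      pose proof (cond_pos_sum S B HS). lra.
  - intros eps Heps. exists B. intros n Hn.
    rewrite coef_sum by (unfold B in Hn; lia). rewrite <- Hl.
    unfold R_dist; rewrite Rminus_diag, Rabs_R0; auto.
Qed.

Lemma orbit_iff q : orbit_dim3 q <-> (b4 q <> 0 \/ b5 q <> 0).
Proof.
  unfold orbit_dim3; rewrite gen_phi_eq, gen_a_eq, gen_b_eq.
  destruct q as [q1 q2 q3 q4 q5]; simpl; split.
  - intros H. destruct (Req_dec q4 0) as [h4|h4]; [|now left].
    destruct (Req_dec q5 0) as [h5|h5]; [|now right].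
    subst. destruct (H 0 1 0) as [_ [H1 _]]; [unfold P5lin, P5zero; simpl; f_equal; ring| lra].
  - intros H c1 c2 c3 E. unfold P5lin, P5zero in E; simpl in E.
    injection E; intros e5 e4 e3 e2 e1.
    assert (c1 = 0).
    { destruct H as [h|h].
      - apply (Rmult_eq_reg_r q4); [lra|auto].
      - apply (Rmult_eq_reg_r q5); [lra|auto]. }
    subst c1.
    destruct (Req_dec q4 0) as [h4|h4].
    + assert (q5 <> 0) by (destruct H; tauto). subst q4.
      assert (c2 = 0) by (apply (Rmult_eq_reg_r q5); [lra|auto]).
      subst. split; [auto|split; auto]. apply (Rmult_eq_reg_r q5); [lra|auto].
    + assert (c3 = 0) by (apply (Rmult_eq_reg_r q4); [lra|auto]).
      subst. split; [auto|split; auto]. apply (Rmult_eq_reg_r q4); [lra|auto].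
Qed.

Lemma isP_affine a b c : isP (fun x y => a + b * x + c * y).
Proof.
  apply isP_plus; [apply isP_plus|].
  - apply isP_const.
  - apply isP_mult; [apply isP_const|apply isP_x].
  - apply isP_mult; [apply isP_const|apply isP_y].
Qed.

Lemma main_sigma (I : P5 -> R) sg k :
  (sg = 1 \/ sg = -1) ->
  is_poly5 I -> invariantS I ->
  forall p : P5, 0 < k * (b4 p + sg * b5 p) ->
  exists (U : P5 -> Prop) (V : R -> R -> Prop) (F : R -> R -> R),
    open5 U /\ U p /\ (forall q, U q -> orbit_dim3 q) /\
    open2 V /\ V (Inv1 p) (Inv2 p) /\
    (forall x y, V x y -> exists q, U q /\ Inv1 q = x /\ Inv2 q = y) /\
    analytic2_on F V /\
    (forall q, U q -> I q = F (Inv1 q) (Inv2 q)) /\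
    (forall G : R -> R -> R,
       (forall q, U q -> I q = G (Inv1 q) (Inv2 q)) ->
       forall x y, V x y -> G x y = F x y).
Proof.
  intros Hs Hpoly Hinv p Hp.
  assert (Hk : k <> 0) by (intro h; rewrite h in Hp; lra).
  assert (Hkk : 0 < k * k) by (pose proof (Rsqr_pos_lt k Hk) as h; unfold Rsqr in h; exact h).
  exists (fun q => 0 < k * (b4 q + sg * b5 q)), (fun _ _ => True), (fun x y => I (sec sg k x y)).
  split; [|split; [exact Hp|split; [|split; [|split; [exact Logic.I|split; [|split; [|split]]]]]]].
  - intros q Hq. set (m := b4 q + sg * b5 q) in *.
    assert (Hm : m <> 0) by (intro h; rewrite h in Hq; lra).
    exists (Rabs m / 2). split; [apply Rdiv_lt_0_compat; [apply Rabs_pos_lt; auto|lra]|].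
    intros q' _ _ _ h4 h5.
    apply Rabs_def2 in h4; apply Rabs_def2 in h5.
    assert (Hd : (b4 q' + sg * b5 q') - m = (b4 q' - b4 q) + sg * (b5 q' - b5 q)) by (unfold m; ring).
    destruct (Rlt_or_le 0 m) as [hm|hm].
    + rewrite Rabs_pos_eq in h4, h5 by lra.
      assert (0 < k) by (destruct (Rlt_or_le 0 k); auto; nra).
      assert (0 < b4 q' + sg * b5 q') by (destruct Hs; subst sg; lra).
      apply Rmult_lt_0_compat; auto.
    + assert (hm' : m < 0) by lra.
      rewrite Rabs_left in h4, h5 by lra.
      assert (k < 0) by (destruct (Rlt_or_le 0 k); auto; nra).
      assert (b4 q' + sg * b5 q' < 0) by (destruct Hs; subst sg; lra).
      nra.
  - intros q Hq. apply orbit_iff.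
    destruct (Req_dec (b4 q) 0) as [h|h]; [right|left; auto].
    intro h'; rewrite h, h' in Hq; lra.
  - intros x y _; exists 1; split; [lra|auto].
  - intros x y _. exists (sec sg k x y).
    destruct (sec_inv sg k x y Hs Hk) as [h1 [h2 h3]]. rewrite h3. auto.
  - intros x0 y0 _. apply isP_analytic.
    destruct Hpoly as [d [c Hc]].
    eapply isP_ext; [intros x y; symmetry; apply Hc|].
    apply isP_sum; intros i1; apply isP_sum; intros i2; apply isP_sum; intros i3;
    apply isP_sum; intros i4; apply isP_sum; intros i5.
    repeat apply isP_mult; try apply isP_const; apply isP_pow; unfold sec; simpl.
    + eapply isP_ext; [|apply (isP_affine 0 0 (-1/k^2))]; intros; simpl; field; auto.
    + eapply isP_ext; [|apply (isP_affine 0 0 (-1/k^2))]; intros; simpl; field; auto.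
    + eapply isP_ext; [|apply (isP_affine 0 0 (sg/k^2))]; intros; simpl; field; auto.
    + eapply isP_ext; [|apply (isP_affine (k/2) (1/(2*k)) 0)]; intros; simpl; field; auto.
    + eapply isP_ext; [|apply (isP_affine (sg*k/2) (-sg/(2*k)) 0)]; intros; simpl; field; auto.
  - intros q Hq. destruct (to_sec sg k q Hs Hq) as [phi [a [b H]]].
    rewrite <- H. symmetry. apply Hinv.
  - intros G HG x y _.
    destruct (sec_inv sg k x y Hs Hk) as [h1 [h2 h3]].
    rewrite HG, h1, h2; auto. rewrite h3; auto.
Qed.

Theorem lemma4p1 (I : P5 -> R) :
  is_poly5 I -> invariantS I ->
  forall p : P5, orbit_dim3 p ->
  exists (U : P5 -> Prop) (V : R -> R -> Prop) (F : R -> R -> R),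
    open5 U /\ U p /\ (forall q, U q -> orbit_dim3 q) /\
    open2 V /\ V (Inv1 p) (Inv2 p) /\
    (forall x y, V x y -> exists q, U q /\ Inv1 q = x /\ Inv2 q = y) /\
    analytic2_on F V /\
    (forall q, U q -> I q = F (Inv1 q) (Inv2 q)) /\
    (forall G : R -> R -> R,
       (forall q, U q -> I q = G (Inv1 q) (Inv2 q)) ->
       forall x y, V x y -> G x y = F x y).
Proof.
  intros Hpoly Hinv p Hp. apply orbit_iff in Hp.
  destruct (Req_dec (b4 p + b5 p) 0) as [h|h].
  - apply (main_sigma I (-1) (b4 p - b5 p)); auto.
    assert (b4 p - b5 p <> 0) by (intro h'; destruct Hp; lra).
    pose proof (Rsqr_pos_lt _ H) as h2; unfold Rsqr in h2.
    replace (b4 p + -1 * b5 p) with (b4 p - b5 p) by ring. exact h2.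
  - apply (main_sigma I 1 (b4 p + b5 p)); auto.
    pose proof (Rsqr_pos_lt _ h) as h2; unfold Rsqr in h2.
    replace (b4 p + 1 * b5 p) with (b4 p + b5 p) by ring. exact h2.
Qed.
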